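(* Let $(X,T)$ be a CAM $G$-system and let $H$ be a finite index normal subgroup of $G$, with left cosets $g_1H,\dots,g_mH$. Suppose $Y\subseteq X$ is a compact $H$-invariant subset containing a point whose $H$-orbit is infinite. Then $\bigcup_{i=1}^m T_{g_i}(Y)=X$, and the points of $Y$ with finite $H$-orbit are dense in $Y$.
   Context: Let $G$ be a countable discrete group. A topological $G$-system $(X,T)$ consists of a compact metric space $X$ and an action $T\colon G\to\mathrm{Homeo}(X)$, $g\mapsto T_g$. The system is topologically transitive if for all nonempty open $U,V\subseteq X$ there is $g\in G$ with $T_gU\cap V\neq\emptyset$; the action is faithful if $T_g=\mathrm{id}_X$ only when $g$ is the identity. A point is periodic if its $G$-orbit is finite. The system is chaotic almost minimal (CAM) if: (1) it is topologically transitive and the action is faithful; (2) the periodic points are dense in $X$; (3) every proper closed $T$-invariant subset of $X$ is finite. *)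

(* Defs.v *)
From HB Require Import structures.
From mathcomp Require Import all_boot monoid.
From mathcomp Require Import all_classical all_reals topology.

Set Implicit Arguments.
Unset Strict Implicit.
Unset Printing Implicit Defensive.

Local Open Scope classical_set_scope.
Local Open Scope group_scope.

Section Dyn.
Variables (G : groupType) (X : topologicalType).

Definition is_action (T : G -> X -> X) : Prop :=
  (forall g, continuous (T g)) /\
  (forall x, T 1 x = x) /\
  (forall g h x, T (g * h) x = T g (T h x)).

Definition faithful_action (T : G -> X -> X) : Prop :=
  forall g, (forall x, T g x = x) -> g = 1.

Definition orbit_in (T : G -> X -> X) (S : set G) (x : X) : set X :=
  [set T g x | g in S].

Definition periodic (T : G -> X -> X) (x : X) : Prop :=
  finite_set (orbit_in T [set: G] x).

Definition topologically_transitive (T : G -> X -> X) : Prop :=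
  forall U V : set X, open U -> open V -> U !=set0 -> V !=set0 ->
    exists g, (T g @` U) `&` V !=set0.

Definition invariant_under (T : G -> X -> X) (S : set G) (A : set X) : Prop :=
  forall g, S g -> T g @` A `<=` A.

Definition CAM (T : G -> X -> X) : Prop :=
  [/\ topologically_transitive T /\ faithful_action T,
      closure (periodic T) = [set: X] &
      forall A : set X, closed A -> invariant_under T [set: G] A ->
        A != [set: X] -> finite_set A].

Definition is_subgroup (H : set G) : Prop :=
  H 1 /\ (forall x y, H x -> H y -> H (x * y^-1)).

Definition is_normal (H : set G) : Prop :=
  forall g h, H h -> H (g^-1 * h * g).

Definition left_coset_reps (H : set G) (m : nat) (r : 'I_m -> G) : Prop :=
  forall x : G, exists! i : 'I_m, exists2 h, H h & x = r i * h.

End Dyn.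

(* Main.v *)
Require Import Defs.
From HB Require Import structures.
From mathcomp Require Import all_boot monoid.
From mathcomp Require Import all_classical all_reals topology.

Local Open Scope classical_set_scope.

Section Helpers.
Local Open Scope group_scope.
Variables (X : topologicalType) (G : groupType) (T : G -> X -> X).
Hypothesis hT : is_action T.

Lemma TK g x : T g^-1 (T g x) = x.
Proof. by case: hT => _ [h1 hm]; rewrite -hm mulVg h1. Qed.

Lemma TKV g x : T g (T g^-1 x) = x.
Proof. by case: hT => _ [h1 hm]; rewrite -hm mulgV h1. Qed.

Lemma image_pre g A : T g @` A = T g^-1 @^-1` A.
Proof.
apply/seteqP; split => x /=.
  by case=> a Aa <-; rewrite TK.
by move=> Ax; exists (T g^-1 x) => //; rewrite TKV.
Qed.

Lemma closed_img g A : closed A -> closed (T g @` A).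
Proof.
move=> cA; rewrite image_pre; case: hT => hc _.
by move: (hc g^-1) => /continuous_closedP; apply.
Qed.

Lemma open_pre g A : open A -> open (T g @^-1` A).
Proof. by case: hT => hc _ oA; apply: open_comp => // x _; apply: hc. Qed.

Lemma closure_inv S A : invariant_under T S A -> invariant_under T S (closure A).
Proof.
move=> iA g Sg _ [x cx <-] B nB.
case: hT => hc _.
have nB' : nbhs x (T g @^-1` B) by apply: (hc g x).
have [a [Aa Ba]] := cx _ nB'.
exists (T g a); split => //; apply: (iA g Sg); by exists a.
Qed.

Lemma finite_cover_interior (I : eqType) (F : I -> set X) (s : seq I) :
  (forall i, closed (F i)) -> forall W, open W -> W !=set0 ->
  W `<=` [set x | exists2 i, i \in s & F i x] ->
  exists i W', [/\ open W', W' !=set0 & W' `<=` F i].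
Proof.
move=> cF; elim: s => [|i s IH] W oW [w Ww] sub.
  by have [i] := sub w Ww.
have [[v [Wv nFv]]|e] := pselect ((W `&` ~` F i) !=set0).
  apply: (IH (W `&` ~` F i)).
  - by apply: openI => //; rewrite openC.
  - by exists v.
  move=> x [Wx nFx]; have [j] := sub x Wx.
  rewrite in_cons => /orP[/eqP ->|js] Fjx; first by [].
  by exists j.
exists i, W; split => //; first by exists w.
move=> x Wx; apply: contra_notP e => nF; by exists x.
Qed.

End Helpers.
Section Main.
Local Open Scope group_scope.
Variables (X : topologicalType) (G : groupType) (T : G -> X -> X).
Hypothesis hT : is_action T.

Lemma cover_lem (H : set G) (m : nat) (r : 'I_m -> G) (C : set X) :
  left_coset_reps H r -> closed C -> invariant_under T H C -> CAM T ->
  (exists2 y, C y & ~ finite_set (orbit_in T H y)) ->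
  \bigcup_(i in [set: 'I_m]) (T (r i) @` C) = [set: X].
Proof.
move=> hr cC iC hC [y Cy infy].
have [hc [h1 hm]] := hT.
set Z := \bigcup_(i in [set: 'I_m]) (T (r i) @` C).
have cZ : closed Z.
  apply: closed_bigcup; first exact: finite_finset.
  by move=> i _; apply: closed_img.
have iZ : invariant_under T [set: G] Z.
  move=> g _ _ [x [i _ [c Cc <-]] <-].
  have [j [[h Hh e] _]] := hr (g * r i).
  exists j => //; exists (T h c); first by apply: (iC h Hh); exists c.
  by rewrite -hm -e hm.
case: hC => _ _ hfin.
apply/eqP; apply/negPn/negP => nZ.
have fZ := hfin Z cZ iZ nZ.
have [i _] := hr 1.
apply: infy; apply: (sub_finite_set _ (finite_image (T (r i)^-1) fZ)).
move=> _ [h Hh <-]; exists (T (r i) (T h y)); last by rewrite TK.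
exists i => //; exists (T h y) => //; apply: (iC h Hh); by exists y.
Qed.

End Main.
Arguments TK {X G T} hT g x.
Arguments TKV {X G T} hT g x.
Arguments closed_img {X G T} hT g {A}.
Arguments open_pre {X G T} hT g {A}.
Arguments closure_inv {X G T} hT {S A}.
Arguments cover_lem {X G T} hT {H m r C}.

Theorem lemma3p2 (R : realType) (X : metricType R) (G : groupType)
  (T : G -> X -> X) (H : set G) (m : nat) (r : 'I_m -> G) (Y : set X) :
  countable [set: G] ->
  compact [set: X] ->
  is_action T ->
  CAM T ->
  is_subgroup H -> is_normal H ->
  left_coset_reps H r ->
  compact Y ->
  invariant_under T H Y ->
  (exists2 y, Y y & ~ finite_set (orbit_in T H y)) ->
  \bigcup_(i in [set: 'I_m]) (T (r i) @` Y) = [set: X] /\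
  Y `<=` closure (Y `&` [set y | finite_set (orbit_in T H y)]).
Proof.
move=> _ _ hT hC [H1 HM] _ hr kY iY exy.
have cY : closed Y by apply: compact_closed => //; apply: metric_hausdorff.
have [hc [h1 hm]] := hT.
have Hinv : forall h, H h -> H (h^-1)%g.
  by move=> h Hh; have := HM 1%g h H1 Hh; rewrite mul1g.
have HMM : forall g h, H g -> H h -> H (g * h)%g.
  by move=> g h Hg Hh; have := HM g _ Hg (Hinv h Hh); rewrite invgK.
split; first exact: (cover_lem hT hr cY iY hC exy).
move=> y Yy.
have [fy|fy] := pselect (finite_set (orbit_in T H y)).
  by apply: subset_closure; split.
set O := closure (orbit_in T H y).
have cO : closed O by apply: closed_closure.
have iorb : invariant_under T H (orbit_in T H y).
  move=> g Hg _ [_ [h Hh <-] <-]; exists (g * h)%g; first exact: HMM.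
  by rewrite hm.
have iO : invariant_under T H O by apply: closure_inv.
have OY : O `<=` Y.
  rewrite (closure_id Y).1 //; apply: closureS.
  move=> _ [h Hh <-]; apply: (iY h Hh); by exists y.
have cov := cover_lem hT hr cO iO hC (ex_intro2 _ _ y (subset_closure (ex_intro2 _ _ 1%g H1 (h1 y))) fy).
have [i [W [oW [w Ww] sW]]] := @finite_cover_interior X 'I_m
  (fun i => T (r i) @` O) (enum 'I_m) (fun i => closed_img hT (r i) cO)
  [set: X] openT (ex_intro _ y I)
  (fun x _ => match (eq_ind_r (fun S => S x) I cov) with
     ex_intro2 i _ Fx => ex_intro2 _ _ i (mem_enum _ i) Fx end).
set V := T (r i) @^-1` W.
have oV : open V by apply: open_pre.
have VO : V `<=` O.
  move=> v Vv; have [o Oo e] := sW _ Vv.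
  by rewrite -(TK hT (r i) v) -e TK.
have [v Vv] : V !=set0 by exists (T (r i)^-1%g w); rewrite /V /= TKV.
have [_ [[h Hh <-] Vhy]] := VO v Vv V (open_nbhs_nbhs (conj oV Vv)).
set V' := T h @^-1` V.
have oV' : open V' by apply: open_pre.
have V'O : V' `<=` O.
  move=> x V'x; rewrite -(TK hT h x); apply: (iO _ (Hinv h Hh)).
  by exists (T h x) => //; apply: VO.
move=> B nB.
have nBV : nbhs y (B `&` V') by apply: filterI => //; apply: open_nbhs_nbhs.
case: hC => _ dP _.
have : closure (periodic T) y by rewrite dP.
move=> /(_ _ nBV) [p [Pp [Bp V'p]]].
exists p; split => //; split; first exact: OY (V'O p V'p).
apply: sub_finite_set Pp => _ [g _ <-]; by exists g.
Qed.
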